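(* Let $G$ be a group with subgroups $H,J$ such that $H\ne G$, $|J:H\cap J|=2$ and $|H:H\cap J|$ finite. Let $g\in J\setminus(H\cap J)$, $K=H\cap H^g$, $k=|H:K|$, $\lambda=|K:H\cap J|$, $L=\langle K,g\rangle$, and $\Gamma=\mathrm{Cos}(G,H,J)$. Then: (a) $\Gamma$ is a locally finite regular graph of valency $k$ and constant edge-multiplicity $\lambda$, and $\Gamma$ is connected if and only if $G=\langle H,J\rangle$; (b) the right multiplication action of $G$ on $V\cup E$ induces an arc-transitive group of automorphisms of $\Gamma$ isomorphic to $G/\mathrm{Core}_G(H\cap J)$, and the stabilisers in $G$ of the vertex $H$, the edge $J$ and the arc $(H,J,Hg)$ are $H$, $J$ and $K\cap J=H\cap J$ respectively; (c) $H\cap L=K$, $|L:K|=2$, $|L:J|=\lambda$, and $\mathrm{Cos}(G,H,L)$ is a locally finite simple graph isomorphic to $\mathrm{SimpCos}(G,H,HgH)$; (d) $\mathrm{Cos}(G,H,L)$ is isomorphic to the base graph of $\Gamma$, $\Gamma$ is a $(G,\lambda)$-extender of it, and $\Gamma$ is simple if and only if $L=J$.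
   Context: Graphs are triples $(V,E,\mathbf I)$, $\mathbf I\subseteq V\times E$, each edge incident with exactly two distinct vertices (multiple edges allowed). A graph is regular of valency $k$ with edge-multiplicity $\lambda$ if every vertex is adjacent to exactly $k$ vertices and every pair of adjacent vertices shares exactly $\lambda$ edges. The base graph is the simple graph on the same vertices with edges the pairs of adjacent vertices. The $\mu$-extender $\Gamma^{(\mu)}$ of a graph $\Gamma$ replaces each edge by $\mu$ edges with the same two end vertices; $\Gamma'$ is a $(G,\mu)$-extender of $\Gamma$ if $\Gamma'\cong\Gamma^{(\mu)}$ and both $\Gamma$ and $\Gamma'$ are $G$-arc-transitive. $\mathrm{Core}_G(X)=\bigcap_{g\in G}X^g$. $\mathrm{Cos}(G,H,J)$: vertices $\{Hx\}$, edges $\{Jy\}$, $Hx$ incident with $Jy$ iff $yx^{-1}\in JH$; $G$ acts by right multiplication. $\mathrm{SimpCos}(G,H,HgH)$: simple graph on $\{Hx\}$ with $\{Hx,Hy\}$ an edge iff $yx^{-1}\in HgH$. *)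

(* Defs.v *)
From Stdlib Require Import List Relations.
Import ListNotations.

Set Implicit Arguments.

Record group := Group {
  carrier :> Type;
  gmul : carrier -> carrier -> carrier;
  ginv : carrier -> carrier;
  gone : carrier;
  gmulA : forall x y z, gmul x (gmul y z) = gmul (gmul x y) z;
  gmul1 : forall x, gmul gone x = x;
  gmulV : forall x, gmul (ginv x) x = gone
}.

Arguments gmul {g}.
Arguments ginv {g}.
Arguments gone {g}.

Section GroupDefs.
Variable G : group.

Definition is_subgroup (S : G -> Prop) : Prop :=
  S gone /\ (forall x y, S x -> S y -> S (gmul x y)) /\ (forall x, S x -> S (ginv x)).

Definition inter (A B : G -> Prop) : G -> Prop := fun x => A x /\ B x.

Definition rcoset (B : G -> Prop) (x : G) : G -> Prop :=
  fun y => exists b, B b /\ y = gmul b x.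

Definition rmul (X : G -> Prop) (x : G) : G -> Prop :=
  fun y => exists z, X z /\ y = gmul z x.

Definition prodset (A B : G -> Prop) : G -> Prop :=
  fun z => exists a b, A a /\ B b /\ z = gmul a b.

(** conjugate X^g = g^-1 X g *)
Definition conjset (X : G -> Prop) (g : G) : G -> Prop :=
  fun z => X (gmul g (gmul z (ginv g))).

Definition core (X : G -> Prop) : G -> Prop :=
  fun z => forall g, conjset X g z.

Definition generated (A : G -> Prop) : G -> Prop :=
  fun x => forall S, is_subgroup S -> (forall a, A a -> S a) -> S x.

End GroupDefs.

Arguments is_subgroup {G}.
Arguments inter {G}.
Arguments rcoset {G}.
Arguments rmul {G}.
Arguments prodset {G}.
Arguments conjset {G}.
Arguments core {G}.
Arguments generated {G}.

Definition card_eq (A : Type) (P : A -> Prop) (n : nat) : Prop :=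
  exists l : list A, NoDup l /\ length l = n /\ forall a, P a <-> In a l.

Definition finite_set (A : Type) (P : A -> Prop) : Prop := exists n, card_eq P n.

Definition index {G : group} (A B : G -> Prop) (n : nat) : Prop :=
  card_eq (fun X : G -> Prop => exists x, A x /\ X = rcoset B x) n.

Record graph := Graph { gV : Type; gE : Type; gI : gV -> gE -> Prop }.
Arguments gI {g}.

Definition is_graph (Gm : graph) : Prop :=
  forall e : gE Gm, exists u v : gV Gm, u <> v /\ gI u e /\ gI v e /\
    forall w, gI w e -> w = u \/ w = v.

Definition adj {Gm : graph} (u v : gV Gm) : Prop :=
  u <> v /\ exists e, gI u e /\ gI v e.

Definition locally_finite (Gm : graph) : Prop :=
  forall v : gV Gm, finite_set (fun e => gI v e).

Definition regular (Gm : graph) (k lam : nat) : Prop :=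
  (forall v : gV Gm, card_eq (adj v) k) /\
  (forall u v : gV Gm, adj u v -> card_eq (fun e => gI u e /\ gI v e) lam).

Definition connected (Gm : graph) : Prop :=
  forall u v : gV Gm, clos_refl_trans _ (@adj Gm) u v.

Definition simple (Gm : graph) : Prop :=
  forall (u v : gV Gm) (e f : gE Gm), u <> v ->
    gI u e -> gI v e -> gI u f -> gI v f -> e = f.

Definition bijective (A B : Type) (f : A -> B) : Prop :=
  exists g : B -> A, (forall a, g (f a) = a) /\ (forall b, f (g b) = b).

Definition graph_iso (G1 G2 : graph) : Prop :=
  exists (fV : gV G1 -> gV G2) (fE : gE G1 -> gE G2),
    bijective fV /\ bijective fE /\
    forall v e, gI v e <-> gI (fV v) (fE e).

Definition of_simple (V : Type) (R : V -> V -> Prop) : graph :=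
  {| gV := V;
     gE := {X : V -> Prop | exists u v, R u v /\ X = (fun w => w = u \/ w = v)};
     gI := fun w X => proj1_sig X w |}.

Definition base_graph (Gm : graph) : graph := of_simple (@adj Gm).

(** mu-extender: each edge replaced by mu parallel edges *)
Definition extender (Gm : graph) (mu : nat) : graph :=
  {| gV := gV Gm;
     gE := (gE Gm * {i : nat | i < mu})%type;
     gI := fun v ei => gI v (fst ei) |}.

Section Cos.
Variable G : group.

Definition CosV (H : G -> Prop) : Type := {X : G -> Prop | exists x, X = rcoset H x}.

Definition cos_inc (H J : G -> Prop) (X : CosV H) (Y : CosV J) : Prop :=
  exists x y, proj1_sig X = rcoset H x /\ proj1_sig Y = rcoset J y /\
    prodset J H (gmul y (ginv x)).

Definition Cos (H J : G -> Prop) : graph :=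
  {| gV := CosV H; gE := CosV J; gI := @cos_inc H J |}.

Definition simpcos_adj (H : G -> Prop) (g : G) (X Y : CosV H) : Prop :=
  exists x y, proj1_sig X = rcoset H x /\ proj1_sig Y = rcoset H y /\
    exists h1 h2, H h1 /\ H h2 /\ gmul y (ginv x) = gmul (gmul h1 g) h2.

Definition SimpCos (H : G -> Prop) (g : G) : graph := of_simple (@simpcos_adj H g).

Definition cos_action_aut (H J : G -> Prop) : Prop :=
  forall (x : G) (v : CosV H) (e : CosV J),
    (exists v' : CosV H, proj1_sig v' = rmul (proj1_sig v) x) /\
    (exists e' : CosV J, proj1_sig e' = rmul (proj1_sig e) x) /\
    (forall (v' : CosV H) (e' : CosV J),
       proj1_sig v' = rmul (proj1_sig v) x -> proj1_sig e' = rmul (proj1_sig e) x ->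
       (cos_inc v e <-> cos_inc v' e')).

Definition cos_arc (H J : G -> Prop) (u : CosV H) (e : CosV J) (v : CosV H) : Prop :=
  u <> v /\ cos_inc u e /\ cos_inc v e.

Definition cos_arc_transitive (H J : G -> Prop) : Prop :=
  forall (u v u' v' : CosV H) (e e' : CosV J),
    cos_arc u e v -> cos_arc u' e' v' ->
    exists x, rmul (proj1_sig u) x = proj1_sig u' /\
              rmul (proj1_sig e) x = proj1_sig e' /\
              rmul (proj1_sig v) x = proj1_sig v'.

Definition same_action (H J : G -> Prop) (x y : G) : Prop :=
  (forall v : CosV H, rmul (proj1_sig v) x = rmul (proj1_sig v) y) /\
  (forall e : CosV J, rmul (proj1_sig e) x = rmul (proj1_sig e) y).

End Cos.

Arguments CosV {G}.
Arguments cos_inc {G H J}.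
Arguments Cos {G}.
Arguments simpcos_adj {G} H g X Y.
Arguments SimpCos {G}.
Arguments cos_action_aut {G}.
Arguments cos_arc {G H J}.
Arguments cos_arc_transitive {G}.
Arguments same_action {G}.

(* Main.v *)
Require Import Defs.
From Stdlib Require Import List Relations FunctionalExtensionality PropExtensionality ProofIrrelevance ClassicalEpsilon Classical.
Import ListNotations.

Lemma pred_ext {A : Type} (P Q : A -> Prop) : (forall z, P z <-> Q z) -> P = Q.
Proof. intro h; apply functional_extensionality; intro z; apply propositional_extensionality; auto. Qed.

Section GB.
Context {G : group}.
Implicit Types x y z a b : G.

Lemma mulA x y z : gmul x (gmul y z) = gmul (gmul x y) z.
Proof. apply gmulA. Qed.
Lemma mulA' x y z : gmul (gmul x y) z = gmul x (gmul y z).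
Proof. now rewrite mulA. Qed.
Lemma mul1g x : gmul gone x = x.
Proof. apply gmul1. Qed.
Lemma mulVg x : gmul (ginv x) x = gone.
Proof. apply gmulV. Qed.
Lemma mulKg x y : gmul (ginv x) (gmul x y) = y.
Proof. now rewrite mulA, mulVg, mul1g. Qed.
Lemma mulgV x : gmul x (ginv x) = gone.
Proof.
  assert (e : gmul (gmul x (ginv x)) (gmul x (ginv x)) = gmul x (ginv x)).
  { rewrite mulA', (mulA (ginv x)), mulVg, mul1g. reflexivity. }
  transitivity (gmul (ginv (gmul x (ginv x))) (gmul (gmul x (ginv x)) (gmul x (ginv x)))).
  - now rewrite mulKg.
  - rewrite e. apply mulVg.
Qed.
Lemma mulg1 x : gmul x gone = x.
Proof. rewrite <- (mulVg x), mulA, mulgV. apply mul1g. Qed.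
Lemma mulKVg x y : gmul x (gmul (ginv x) y) = y.
Proof. now rewrite mulA, mulgV, mul1g. Qed.
Lemma inv_uniq x y : gmul x y = gone -> ginv x = y.
Proof. intro h. rewrite <- (mulg1 (ginv x)), <- h. apply mulKg. Qed.
Lemma invK x : ginv (ginv x) = x.
Proof. apply inv_uniq. apply mulVg. Qed.
Lemma invM x y : ginv (gmul x y) = gmul (ginv y) (ginv x).
Proof. apply inv_uniq. now rewrite mulA', mulKVg, mulgV. Qed.
Lemma inv1 : ginv (@gone G) = gone.
Proof. apply inv_uniq. apply mul1g. Qed.
End GB.

Ltac gsimpl := repeat (rewrite ?mulA', ?invM, ?invK, ?inv1, ?mul1g, ?mulg1, ?mulgV, ?mulVg, ?mulKg, ?mulKVg).
Ltac gsimpl_in h := repeat (rewrite ?mulA', ?invM, ?invK, ?inv1, ?mul1g, ?mulg1, ?mulgV, ?mulVg, ?mulKg, ?mulKVg in h).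

Section SG.
Context {G : group}.
Implicit Types x y z a b : G.
Variable B : G -> Prop.
Hypothesis sB : is_subgroup B.
Lemma sg1 : B gone. Proof. apply sB. Qed.
Lemma sgM x y : B x -> B y -> B (gmul x y). Proof. apply sB. Qed.
Lemma sgV x : B x -> B (ginv x). Proof. apply sB. Qed.
Lemma sgVr x : B (ginv x) -> B x. Proof. intro h; rewrite <- invK; now apply sgV. Qed.
Lemma sgMl x y : B x -> B (gmul x y) -> B y.
Proof. intros h1 h2. rewrite <- (mulKg x y). apply sgM; auto. now apply sgV. Qed.
Lemma sgMr x y : B y -> B (gmul x y) -> B x.
Proof. intros h1 h2. rewrite <- (mulg1 x), <- (mulgV y), mulA. apply sgM; auto. now apply sgV. Qed.

Lemma rcoset_mem x y : rcoset B x y <-> B (gmul y (ginv x)).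
Proof. split. intros [b [hb ->]]. now gsimpl. intro h. exists (gmul y (ginv x)); split; auto. now gsimpl. Qed.

Lemma rcoset_eq x y : rcoset B x = rcoset B y <-> B (gmul x (ginv y)).
Proof.
  split.
  - intro e. apply (rcoset_mem y x). rewrite <- e. apply rcoset_mem. gsimpl. apply sg1.
  - intro h. apply pred_ext. intro z. rewrite !rcoset_mem. split; intro hz.
    + replace (gmul z (ginv y)) with (gmul (gmul z (ginv x)) (gmul x (ginv y))) by (now gsimpl). now apply sgM.
    + replace (gmul z (ginv x)) with (gmul (gmul z (ginv y)) (ginv (gmul x (ginv y)))) by (now gsimpl). apply sgM; auto. now apply sgV.
Qed.

Lemma rcoset1 : rcoset B gone = B.
Proof. apply pred_ext. intro z. rewrite rcoset_mem. gsimpl. tauto. Qed.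

Lemma rmul_rcoset x y : rmul (rcoset B x) y = rcoset B (gmul x y).
Proof.
  apply pred_ext. intro z. rewrite rcoset_mem. split.
  - intros [w [hw ->]]. apply rcoset_mem in hw. now gsimpl.
  - intro h. exists (gmul z (ginv y)). split. apply rcoset_mem. gsimpl. gsimpl_in h. exact h. now gsimpl.
Qed.

Lemma rmul_sub x : rmul B x = B <-> B x.
Proof.
  pose proof (rmul_rcoset gone x) as e. rewrite rcoset1, mul1g in e. rewrite e.
  pose proof (rcoset_eq x gone) as i. rewrite rcoset1 in i. rewrite i. gsimpl. tauto.
Qed.
End SG.
Lemma sig_eq {A : Type} {P : A -> Prop} (u v : {a | P a}) : proj1_sig u = proj1_sig v -> u = v.
Proof. destruct u, v; simpl; intros ->; f_equal; apply proof_irrelevance. Qed.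

Lemma card_ext {A : Type} (P Q : A -> Prop) n : (forall a, P a <-> Q a) -> card_eq P n -> card_eq Q n.
Proof. intros h [l [h1 [h2 h3]]]. exists l; split; [|split]; auto. intro a; rewrite <- h; auto. Qed.

Lemma corr_list {A B X : Type} (S : X -> Prop) (F : X -> A) (F' : X -> B) :
  (forall x y, S x -> S y -> (F x = F y <-> F' x = F' y)) ->
  forall l, NoDup l -> (forall a, In a l -> exists x, S x /\ a = F x) ->
  exists l', NoDup l' /\ length l' = length l /\
    forall b, In b l' <-> exists x, S x /\ In (F x) l /\ b = F' x.
Proof.
  intros hF l. induction l as [|a l IH]; intros hnd hin.
  - exists []. simpl. split; [constructor|split; auto]. intro b; split; [tauto|]. intros [x [_ [[] _]]].
  - inversion hnd as [|? ? hna hnd']; subst.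
    destruct (hin a (or_introl eq_refl)) as [x0 [hx0 ->]].
    destruct IH as [l' [h1 [h2 h3]]]; auto. { intros a' ha'; apply hin; now right. }
    exists (F' x0 :: l'). split; [|split].
    + constructor; auto. intro hi. apply h3 in hi. destruct hi as [x [hx [hi e]]].
      apply hna. assert (ee : F x0 = F x) by (apply (proj2 (hF x0 x hx0 hx)); congruence). rewrite ee; exact hi.
    + simpl; now rewrite h2.
    + intro b. simpl. rewrite h3. split.
      * intros [<-|[x [hx [hi ->]]]]. exists x0; auto. exists x; auto.
      * intros [x [hx [[e|hi] ->]]]. left. apply (proj1 (hF x0 x hx0 hx)); auto. right. exists x; auto.
Qed.

Lemma card_corr {A B X : Type} (S : X -> Prop) (F : X -> A) (F' : X -> B) n :
  (forall x y, S x -> S y -> (F x = F y <-> F' x = F' y)) ->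
  card_eq (fun a => exists x, S x /\ a = F x) n -> card_eq (fun b => exists x, S x /\ b = F' x) n.
Proof.
  intros hF [l [hnd [hlen hmem]]].
  destruct (corr_list S F F' hF l hnd) as [l' [h1 [h2 h3]]].
  { intros a ha. now apply hmem. }
  exists l'. split; [|split]; auto. congruence.
  intro b. rewrite h3. split.
  - intros [x [hx ->]]. exists x. split; auto. split; auto. apply hmem. exists x; auto.
  - intros [x [hx [_ ->]]]. exists x; auto.
Qed.

Lemma bij_inj_surj {A B : Type} (f : A -> B) :
  (forall a a', f a = f a' -> a = a') -> (forall b, exists a, f a = b) -> bijective f.
Proof.
  intros hi hs. exists (fun b => proj1_sig (constructive_indefinite_description _ (hs b))).
  split.
  - intro a. apply hi. exact (proj2_sig (constructive_indefinite_description _ (hs (f a)))).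
  - intro b. exact (proj2_sig (constructive_indefinite_description _ (hs b))).
Qed.

Lemma fiber_bij {A B : Type} (f : A -> B) (n : nat) (a0 : A) :
  (forall b, card_eq (fun a => f a = b) n) ->
  exists h : A -> B * {i : nat | i < n}, bijective h /\ forall a, fst (h a) = f a.
Proof.
  intro hc.
  set (L := fun b => proj1_sig (constructive_indefinite_description _ (hc b))).
  assert (hL : forall b, NoDup (L b) /\ length (L b) = n /\ forall a, f a = b <-> In a (L b)).
  { intro b. exact (proj2_sig (constructive_indefinite_description _ (hc b))). }
  assert (hp : forall a, exists i, i < n /\ nth i (L (f a)) a0 = a).
  { intro a. destruct (hL (f a)) as [_ [hl hm]]. rewrite <- hl. apply In_nth. now apply hm. }
  set (P := fun a => constructive_indefinite_description _ (hp a)).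
  exists (fun a => (f a, exist _ (proj1_sig (P a)) (proj1 (proj2_sig (P a))))).
  split; [|reflexivity].
  apply bij_inj_surj.
  - intros a a' e. injection e as e1 e2.
    pose proof (proj2 (proj2_sig (P a))) as q. pose proof (proj2 (proj2_sig (P a'))) as q'.
    rewrite <- q, <- q'. rewrite e1 at 1. rewrite e2. reflexivity.
  - intros [b [i hi]].
    destruct (hL b) as [hnd [hl hm]].
    set (a := nth i (L b) a0).
    assert (hfa : f a = b). { apply hm. apply nth_In. now rewrite hl. }
    exists a. f_equal; auto. apply sig_eq. simpl.
    pose proof (proj2_sig (P a)) as [hi' q]. simpl in *.
    revert hi' q. generalize (proj1_sig (P a)). intros j hj q. rewrite hfa in q.
    apply (proj1 (NoDup_nth (L b) a0) hnd); try (rewrite hl; auto). rewrite q. reflexivity.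
Qed.

Definition mkC {G : group} (B : G -> Prop) (x : G) : CosV B :=
  exist _ (rcoset B x) (ex_intro _ x eq_refl).

Lemma sg_inter {G : group} (A B : G -> Prop) : is_subgroup A -> is_subgroup B -> is_subgroup (inter A B).
Proof.
  intros hA hB. split; [|split].
  - split; apply sg1; auto.
  - intros x y [h1 h2] [h3 h4]. split; apply sgM; auto.
  - intros x [h1 h2]. split; apply sgV; auto.
Qed.

Lemma sg_conj {G : group} (A : G -> Prop) (g : G) : is_subgroup A -> is_subgroup (conjset A g).
Proof.
  intros hA. unfold conjset. split; [|split].
  - gsimpl. apply sg1; auto.
  - intros x y h1 h2. replace (gmul g (gmul (gmul x y) (ginv g))) with
      (gmul (gmul g (gmul x (ginv g))) (gmul g (gmul y (ginv g)))) by (now gsimpl). apply sgM; auto.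
  - intros x h. replace (gmul g (gmul (ginv x) (ginv g))) with (ginv (gmul g (gmul x (ginv g)))) by (now gsimpl).
    apply sgV; auto.
Qed.

Lemma mkC_eq {G : group} (B : G -> Prop) x y : mkC B x = mkC B y <-> rcoset B x = rcoset B y.
Proof. split; intro h. now apply (f_equal (@proj1_sig _ _)) in h. now apply sig_eq. Qed.

Lemma CosV_rep {G : group} {B : G -> Prop} (v : CosV B) : exists a, proj1_sig v = rcoset B a.
Proof. destruct v as [X [a ha]]. now exists a. Qed.

Lemma CosV_mk {G : group} {B : G -> Prop} (v : CosV B) a : proj1_sig v = rcoset B a -> v = mkC B a.
Proof. intro h. now apply sig_eq. Qed.

Section GenM.
Set Default Proof Using "All".
Context {G : group} (H M : G -> Prop) (g : G).
Hypotheses (sH : is_subgroup H) (sM : is_subgroup M) (Mg : M g) (gnH : ~ H g)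
  (Hgg : H (gmul g g))
  (MH : forall m, M m -> H m \/ H (gmul m (ginv g)))
  (Mconj : forall m, H m -> M m -> H (gmul g (gmul m (ginv g)))).

Lemma prodset_char z : prodset M H z <-> H (ginv z) \/ H (gmul (ginv z) (ginv g)).
Proof.
  split.
  - intros [m [h [hm [hh ->]]]]. destruct (MH m hm) as [h1|h1].
    + left. gsimpl. apply sgM; auto; apply sgV; auto.
    + right. gsimpl.
      assert (e : gmul g m = gmul (gmul g (gmul (gmul m (ginv g)) (ginv g))) (gmul g g)) by (now gsimpl).
      assert (hgm : H (gmul g m)).
      { rewrite e. apply sgM; auto. apply Mconj; auto. apply sgM; auto. apply sgV; auto. }
      replace (gmul (ginv h) (gmul (ginv m) (ginv g))) with (gmul (ginv h) (ginv (gmul g m))) by (now gsimpl).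
      apply sgM; auto; apply sgV; auto.
  - intros [h1|h1].
    + exists gone, z. split; [apply sg1; auto|split]. apply sgVr; auto. now gsimpl.
    + exists (ginv g), (gmul g z). split; [apply sgV; auto|split].
      replace (gmul g z) with (ginv (gmul (ginv z) (ginv g))) by (now gsimpl). apply sgV; auto.
      now gsimpl.
Qed.

Lemma prodset_inv z m h : prodset M H z -> M m -> H h -> prodset M H (gmul m (gmul z h)).
Proof.
  intros [m1 [h1 [hm1 [hh1 ->]]]] hm hh. exists (gmul m m1), (gmul h1 h).
  split; [apply sgM; auto|split; [apply sgM; auto|]]. now gsimpl.
Qed.

Lemma inc_char (v : CosV H) (e : CosV M) a w :
  proj1_sig v = rcoset H a -> proj1_sig e = rcoset M w ->
  (cos_inc v e <-> H (gmul a (ginv w)) \/ H (gmul a (gmul (ginv w) (ginv g)))).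
Proof.
  intros hv he.
  assert (key : cos_inc v e <-> prodset M H (gmul w (ginv a))).
  { split.
    - intros [x [y [hx [hy hp]]]]. rewrite hv in hx. rewrite he in hy.
      apply (rcoset_eq H sH) in hx. apply (rcoset_eq M sM) in hy.
      replace (gmul w (ginv a)) with (gmul (gmul w (ginv y)) (gmul (gmul y (ginv x)) (ginv (gmul a (ginv x)))))
        by (now gsimpl).
      apply prodset_inv; auto. apply sgV; auto.
    - intro hp. exists a, w. auto. }
  rewrite key, prodset_char. gsimpl. tauto.
Qed.

Lemma inc_pair (v : CosV H) (e : CosV M) w :
  proj1_sig e = rcoset M w ->
  (cos_inc v e <-> proj1_sig v = rcoset H w \/ proj1_sig v = rcoset H (gmul g w)).
Proof.
  intros he. destruct (CosV_rep v) as [a ha]. rewrite (inc_char v e a w ha he), ha.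
  rewrite !(rcoset_eq H sH). gsimpl. tauto.
Qed.

Lemma edge_char (v : CosV H) (e : CosV M) a :
  proj1_sig v = rcoset H a ->
  (cos_inc v e <-> exists h, H h /\ proj1_sig e = rcoset M (gmul h a)).
Proof.
  intros hv. destruct (CosV_rep e) as [w hw]. split.
  - intro hi. apply (inc_char v e a w hv hw) in hi. destruct hi as [h1|h1].
    + exists (gmul w (ginv a)). split. replace (gmul w (ginv a)) with (ginv (gmul a (ginv w))) by (now gsimpl).
      apply sgV; auto. rewrite hw. now gsimpl.
    + exists (gmul g (gmul w (ginv a))). split.
      replace (gmul g (gmul w (ginv a))) with (ginv (gmul a (gmul (ginv w) (ginv g)))) by (now gsimpl).
      apply sgV; auto.
      rewrite hw. apply (rcoset_eq M sM). gsimpl. apply sgV; auto.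
  - intros [h [hh he]]. apply (inc_char v e a _ hv he). left. gsimpl. apply sgV; auto.
Qed.

Lemma pair_char (u v : CosV H) (e : CosV M) a :
  proj1_sig u = rcoset H a -> cos_inc u e -> cos_inc v e -> u <> v ->
  exists h, H h /\ proj1_sig e = rcoset M (gmul h a) /\ proj1_sig v = rcoset H (gmul g (gmul h a)).
Proof.
  intros hu hue hve huv. apply (edge_char u e a hu) in hue. destruct hue as [h [hh he]].
  exists h. split; auto. split; auto.
  destruct (CosV_rep v) as [b hb]. apply (inc_char v e b _ hb he) in hve. destruct hve as [h1|h1].
  - exfalso. apply huv. apply sig_eq. rewrite hu, hb. apply (rcoset_eq H sH).
    replace (gmul a (ginv b)) with (gmul (ginv h) (ginv (gmul b (ginv (gmul h a))))) by (now gsimpl).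
    apply sgM; auto; apply sgV; auto.
  - rewrite hb. apply (rcoset_eq H sH). gsimpl. gsimpl_in h1. exact h1.
Qed.

Lemma adj_char (u v : CosV H) a :
  proj1_sig u = rcoset H a ->
  (@adj (Cos H M) u v <-> exists h, H h /\ proj1_sig v = rcoset H (gmul g (gmul h a))).
Proof.
  intros hu. split.
  - intros [huv [e [h1 h2]]]. destruct (pair_char u v e a hu h1 h2 huv) as [h [hh [_ hv]]]. eauto.
  - intros [h [hh hv]]. split.
    + intro e. subst v. rewrite hu in hv. apply (rcoset_eq H sH) in hv. gsimpl_in hv.
      apply gnH. apply sgVr; auto. apply (sgMl H sH (ginv h)); auto. apply sgV; auto.
    + exists (mkC M (gmul h a)). simpl. split.
      * apply (edge_char u _ a hu). eauto.
      * apply (inc_char v (mkC M (gmul h a)) _ (gmul h a) hv eq_refl). right. gsimpl. apply sg1; auto.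
Qed.

Lemma cos_is_graph : is_graph (Cos H M).
Proof.
  intros e. destruct (CosV_rep e) as [w hw]. exists (mkC H w), (mkC H (gmul g w)). simpl.
  split; [|split; [|split]].
  - intro h. apply mkC_eq, (rcoset_eq H sH) in h. gsimpl_in h. apply gnH, sgVr; auto.
  - apply (inc_pair _ e w hw). now left.
  - apply (inc_pair _ e w hw). now right.
  - intros x hx. apply (inc_pair _ e w hw) in hx. destruct hx as [h|h]; [left|right]; now apply sig_eq.
Qed.

Lemma cos_locfin n : index H (inter H M) n -> locally_finite (Cos H M).
Proof.
  intros hn v. exists n. destruct (CosV_rep v) as [a ha].
  apply (card_ext (fun e => exists h, H h /\ e = mkC M (gmul h a))).
  { intro e. simpl. rewrite (edge_char v e a ha). split; intros [h [hh he]]; exists h; split; auto.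
    now rewrite he. now apply sig_eq. }
  apply (card_corr H (rcoset (inter H M)) (fun h => mkC M (gmul h a))); [|exact hn].
  intros x y hx hy. rewrite mkC_eq, (rcoset_eq _ (sg_inter H M sH sM)), (rcoset_eq M sM). gsimpl.
  unfold inter. split; [tauto|]. intro h; split; auto. apply sgM; auto. apply sgV; auto.
Qed.

Definition Kset := inter H (conjset H g).
Lemma sK : is_subgroup Kset.
Proof. apply sg_inter; auto. apply sg_conj; auto. Qed.

Lemma cos_valency k : index H Kset k -> forall v : CosV H, card_eq (@adj (Cos H M) v) k.
Proof.
  intros hk v. destruct (CosV_rep v) as [a ha].
  apply (card_ext (fun u => exists h, H h /\ u = mkC H (gmul g (gmul h a)))).
  { intro u. rewrite (adj_char v u a ha). split; intros [h [hh he]]; exists h; split; auto.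
    now rewrite he. now apply sig_eq. }
  apply (card_corr H (rcoset Kset) (fun h => mkC H (gmul g (gmul h a)))); [|exact hk].
  intros x y hx hy. rewrite mkC_eq, (rcoset_eq _ sK), (rcoset_eq H sH). gsimpl.
  unfold Kset, inter, conjset. gsimpl. split; [tauto|]. intro h; split; auto. apply sgM; auto. apply sgV; auto.
Qed.

Lemma cos_mult lam : index Kset (inter H M) lam ->
  forall u v : CosV H, @adj (Cos H M) u v -> card_eq (fun e : CosV M => cos_inc u e /\ cos_inc v e) lam.
Proof.
  intros hl u v huv. destruct (CosV_rep u) as [a ha].
  destruct (proj1 (adj_char u v a ha) huv) as [h2 [hh2 hv]].
  apply (card_ext (fun e => exists x, Kset x /\ e = mkC M (gmul x (gmul h2 a)))).
  { intro e. split.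
    - intros [x [hx ->]]. destruct hx as [hx1 hx2]. split.
      + apply (edge_char u _ a ha). exists (gmul x h2). split. apply sgM; auto. simpl. now gsimpl.
      + apply (inc_char v (mkC M (gmul x (gmul h2 a))) _ (gmul x (gmul h2 a)) hv eq_refl). right. gsimpl.
        unfold conjset in hx2. replace (gmul g (gmul (ginv x) (ginv g))) with (ginv (gmul g (gmul x (ginv g))))
          by (now gsimpl). apply sgV; auto.
    - intros [h1 h2']. destruct huv as [huv _].
      destruct (pair_char u v e a ha h1 h2' huv) as [h [hh [he hv']]].
      rewrite hv in hv'. apply (rcoset_eq H sH) in hv'. gsimpl_in hv'.
      exists (gmul h (ginv h2)). split.
      + split. apply sgM; auto. apply sgV; auto. unfold conjset.
        replace (gmul g (gmul (gmul h (ginv h2)) (ginv g))) with (ginv (gmul g (gmul h2 (gmul (ginv h) (ginv g)))))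
          by (now gsimpl). apply sgV; auto.
      + apply sig_eq. rewrite he. simpl. now gsimpl. }
  apply (card_corr Kset (rcoset (inter H M)) (fun x => mkC M (gmul x (gmul h2 a)))); [|exact hl].
  intros x y [hx _] [hy _]. rewrite mkC_eq, (rcoset_eq _ (sg_inter H M sH sM)), (rcoset_eq M sM). gsimpl.
  unfold inter. split; [tauto|]. intro h; split; auto. apply sgM; auto. apply sgV; auto.
Qed.

Lemma cos_simple : (forall x, Kset x -> M x) -> simple (Cos H M).
Proof.
  intros hKM u v e f huv h1 h2 h3 h4. destruct (CosV_rep u) as [a ha].
  destruct (pair_char u v e a ha h1 h2 huv) as [h [hh [he hv]]].
  destruct (pair_char u v f a ha h3 h4 huv) as [h' [hh' [hf hv']]].
  apply sig_eq. rewrite he, hf. apply (rcoset_eq M sM).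
  rewrite hv in hv'. apply (rcoset_eq H sH) in hv'. gsimpl_in hv. gsimpl. apply hKM. gsimpl_in hv'.
  split. apply sgM; auto; apply sgV; auto. unfold conjset. gsimpl. exact hv'.
Qed.

Lemma simple_K : simple (Cos H M) -> forall x, Kset x -> M x.
Proof.
  intros hs x [hx1 hx2].
  assert (e : mkC M gone = mkC M x).
  { apply (hs (mkC H gone) (mkC H g)).
    - intro h. apply mkC_eq, (rcoset_eq H sH) in h. gsimpl_in h. apply gnH, sgVr; auto.
    - apply (inc_pair _ (mkC M gone) gone eq_refl). now left.
    - apply (inc_pair _ (mkC M gone) gone eq_refl). right. simpl. now gsimpl.
    - apply (inc_pair _ (mkC M x) x eq_refl). left. simpl. apply (rcoset_eq H sH). gsimpl. apply sgV; auto.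
    - apply (inc_pair _ (mkC M x) x eq_refl). right. simpl. apply (rcoset_eq H sH). unfold conjset in hx2. gsimpl.
      replace (gmul g (gmul (ginv x) (ginv g))) with (ginv (gmul g (gmul x (ginv g)))) by (now gsimpl).
      apply sgV; auto. }
  apply mkC_eq, (rcoset_eq M sM) in e. gsimpl_in e. apply sgVr; auto.
Qed.
End GenM.

Lemma gen_sg {G : group} (A : G -> Prop) : is_subgroup (generated A).
Proof.
  split; [|split].
  - intros S hS _. apply (sg1 S hS).
  - intros x y hx hy S hS hA. apply (sgM S hS); [apply hx|apply hy]; auto.
  - intros x hx S hS hA. apply (sgV S hS); apply hx; auto.
Qed.
Lemma gen_base {G : group} (A : G -> Prop) a : A a -> generated A a.
Proof. intros ha S hS hA. auto. Qed.

Section GenM2.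
Set Default Proof Using "All".
Context {G : group} (H M : G -> Prop) (g : G).
Hypotheses (sH : is_subgroup H) (sM : is_subgroup M) (Mg : M g) (gnH : ~ H g)
  (Hgg : H (gmul g g))
  (MH : forall m, M m -> H m \/ H (gmul m (ginv g)))
  (Mconj : forall m, H m -> M m -> H (gmul g (gmul m (ginv g)))).

Lemma arc_cases (u v : CosV H) (e : CosV M) w :
  cos_arc u e v -> proj1_sig e = rcoset M w ->
  (proj1_sig u = rcoset H w /\ proj1_sig v = rcoset H (gmul g w)) \/
  (proj1_sig u = rcoset H (gmul g w) /\ proj1_sig v = rcoset H w).
Proof.
  intros [huv [hu hv]] he.
  apply (inc_pair H M g sH sM Mg gnH Hgg MH Mconj u e w he) in hu.
  apply (inc_pair H M g sH sM Mg gnH Hgg MH Mconj v e w he) in hv.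
  destruct hu as [hu|hu], hv as [hv|hv]; auto; exfalso; apply huv; apply sig_eq; congruence.
Qed.

Ltac rc_close B sB := rewrite ?(rmul_rcoset B); apply (rcoset_eq B sB); gsimpl;
  first [apply (sg1 B sB) | assumption].

Lemma cos_arc_trans : cos_arc_transitive H M.
Proof.
  intros u v u' v' e e' ha ha'.
  destruct (CosV_rep e) as [w hw]. destruct (CosV_rep e') as [w' hw'].
  destruct (arc_cases u v e w ha hw) as [[hu hv]|[hu hv]];
  destruct (arc_cases u' v' e' w' ha' hw') as [[hu' hv']|[hu' hv']];
  rewrite hu, hv, hw, hu', hv', hw'.
  - exists (gmul (ginv w) w'). split; [|split]; rc_close H sH || rc_close M sM.
  - exists (gmul (ginv w) (gmul g w')). split; [|split]; first [rc_close H sH | rc_close M sM].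
  - exists (gmul (ginv w) (gmul g w')). split; [|split]; first [rc_close H sH | rc_close M sM].
  - exists (gmul (ginv w) w'). split; [|split]; first [rc_close H sH | rc_close M sM].
Qed.

Lemma cos_aut : cos_action_aut H M.
Proof.
  intros x v e. destruct (CosV_rep v) as [a ha]. destruct (CosV_rep e) as [w hw].
  split; [|split].
  - exists (mkC H (gmul a x)). simpl. rewrite ha. now rewrite (rmul_rcoset H).
  - exists (mkC M (gmul w x)). simpl. rewrite hw. now rewrite (rmul_rcoset M).
  - intros v' e' hv' he'. rewrite ha, (rmul_rcoset H) in hv'. rewrite hw, (rmul_rcoset M) in he'.
    rewrite (inc_char H M g sH sM Mg gnH Hgg MH Mconj v e a w ha hw).
    rewrite (inc_char H M g sH sM Mg gnH Hgg MH Mconj v' e' _ _ hv' he'). gsimpl. tauto.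
Qed.

Definition cadj := @adj (Cos H M).

Lemma cadj_sym u v : cadj u v -> cadj v u.
Proof. intros [h1 [e [h2 h3]]]. split; [congruence|]. exists e; auto. Qed.

Lemma crt_sym u v : clos_refl_trans _ cadj u v -> clos_refl_trans _ cadj v u.
Proof.
  intro h. induction h. apply rt_step, cadj_sym; auto. apply rt_refl. eapply rt_trans; eauto.
Qed.

Lemma crt_gen u v : clos_refl_trans _ cadj u v -> forall a b,
  proj1_sig u = rcoset H a -> proj1_sig v = rcoset H b ->
  generated (fun y => H y \/ M y) (gmul b (ginv a)).
Proof.
  pose proof (gen_sg (fun y => H y \/ M y)) as sg.
  intro h. induction h as [u v huv|u|u v w h1 IH1 h2 IH2]; intros a b hu hv.
  - apply (adj_char H M g sH sM Mg gnH Hgg MH Mconj u v a hu) in huv. destruct huv as [h [hh hv']].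
    rewrite hv in hv'. apply (rcoset_eq H sH) in hv'.
    replace (gmul b (ginv a)) with (gmul (gmul b (ginv (gmul g (gmul h a)))) (gmul g h)) by (now gsimpl).
    apply sgM; auto. apply gen_base; auto. apply sgM; auto; apply gen_base; auto.
  - rewrite hu in hv. apply (rcoset_eq H sH) in hv. apply sgVr; auto. apply gen_base. left. now gsimpl.
  - destruct (CosV_rep v) as [c hc].
    replace (gmul b (ginv a)) with (gmul (gmul b (ginv c)) (gmul c (ginv a))) by (now gsimpl).
    apply sgM; eauto.
Qed.

Lemma crt_trans_r u v y : clos_refl_trans _ cadj u v -> forall a b,
  proj1_sig u = rcoset H a -> proj1_sig v = rcoset H b ->
  clos_refl_trans _ cadj (mkC H (gmul a y)) (mkC H (gmul b y)).
Proof.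
  intro h. induction h as [u v huv|u|u v w h1 IH1 h2 IH2]; intros a b hu hv.
  - apply (adj_char H M g sH sM Mg gnH Hgg MH Mconj u v a hu) in huv. destruct huv as [h [hh hv']].
    rewrite hv in hv'. apply (rcoset_eq H sH) in hv'.
    apply rt_step. apply (adj_char H M g sH sM Mg gnH Hgg MH Mconj (mkC H (gmul a y)) _ (gmul a y) eq_refl).
    exists h. split; auto. simpl. apply (rcoset_eq H sH). gsimpl. gsimpl_in hv'. exact hv'.
  - rewrite hu in hv. replace (mkC H (gmul b y)) with (mkC H (gmul a y)). apply rt_refl.
    apply mkC_eq, (rcoset_eq H sH). apply (rcoset_eq H sH) in hv. gsimpl. exact hv.
  - destruct (CosV_rep v) as [c hc]. eapply rt_trans; eauto.
Qed.

Lemma cos_connected : connected (Cos H M) <-> forall x, generated (fun y => H y \/ M y) x.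
Proof.
  split.
  - intros hc x. pose proof (crt_gen _ _ (hc (mkC H gone) (mkC H x)) gone x eq_refl eq_refl) as h.
    gsimpl_in h. exact h.
  - intros hg.
    set (S := fun x => clos_refl_trans _ cadj (mkC H gone) (mkC H x)).
    assert (sS : is_subgroup S).
    { split; [|split].
      - apply rt_refl.
      - intros x y hx hy. unfold S in *. eapply rt_trans. exact hy.
        pose proof (crt_trans_r _ _ y hx gone x eq_refl eq_refl) as e. rewrite mul1g in e. exact e.
      - intros x hx. unfold S in *. apply crt_sym.
        pose proof (crt_trans_r _ _ (ginv x) hx gone x eq_refl eq_refl) as e. rewrite mul1g, mulgV in e. exact e. }
    assert (hS : forall x, S x).
    { intro x. apply (hg x S sS). intros y [hy|hy].
      - unfold S. replace (mkC H y) with (mkC H gone). apply rt_refl. apply mkC_eq, (rcoset_eq H sH).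
        gsimpl. apply sgV; auto.
      - destruct (MH y hy) as [h1|h1].
        + unfold S. replace (mkC H y) with (mkC H gone). apply rt_refl. apply mkC_eq, (rcoset_eq H sH).
          gsimpl. apply sgV; auto.
        + unfold S. apply rt_step. apply (adj_char H M g sH sM Mg gnH Hgg MH Mconj (mkC H gone) _ gone eq_refl).
          exists gone. split. apply sg1; auto. simpl. apply (rcoset_eq H sH). gsimpl. exact h1. }
    intros u v. destruct (CosV_rep u) as [a ha]. destruct (CosV_rep v) as [b hb].
    rewrite (CosV_mk u a ha), (CosV_mk v b hb). eapply rt_trans. apply crt_sym, hS. apply hS.
Qed.

Section Iso.
Variable R : CosV H -> CosV H -> Prop.
Hypotheses (hR1 : forall u v, R u v -> exists x h, H h /\ proj1_sig u = rcoset H x /\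
                   proj1_sig v = rcoset H (gmul g (gmul h x)))
  (hR2 : forall w, R (mkC H w) (mkC H (gmul g w)))
  (hKM : forall x, Kset H g x -> M x).

Lemma edge_pair (e : CosV M) : exists u v, R u v /\ (fun v => cos_inc v e) = (fun w => w = u \/ w = v).
Proof.
  destruct (CosV_rep e) as [w hw]. exists (mkC H w), (mkC H (gmul g w)). split; auto.
  apply pred_ext. intro v. rewrite (inc_pair H M g sH sM Mg gnH Hgg MH Mconj v e w hw).
  split; intros [h|h]; [left|right|left|right]; try (now apply sig_eq); subst v; reflexivity.
Qed.

Lemma iso_simple : graph_iso (Cos H M) (of_simple R).
Proof.
  exists (fun v => v), (fun e => exist (fun X : CosV H -> Prop => exists u v, R u v /\ X = (fun w => w = u \/ w = v)) (fun v : CosV H => cos_inc v e) (edge_pair e) : gE (of_simple R)). split; [|split].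
  - exists (fun v => v). split; reflexivity.
  - apply bij_inj_surj.
    + intros e f hef. apply (f_equal (@proj1_sig _ _)) in hef. simpl in hef.
      destruct (CosV_rep e) as [w hw].
      assert (hu : cos_inc (mkC H w) e) by (apply (inc_pair H M g sH sM Mg gnH Hgg MH Mconj _ e w hw); now left).
      assert (hv : cos_inc (mkC H (gmul g w)) e) by (apply (inc_pair H M g sH sM Mg gnH Hgg MH Mconj _ e w hw); now right).
      apply (cos_simple H M g sH sM Mg gnH Hgg MH Mconj hKM (mkC H w) (mkC H (gmul g w))); auto.
      * intro h. apply mkC_eq, (rcoset_eq H sH) in h. gsimpl_in h. apply gnH, sgVr; auto.
      * change ((fun v => cos_inc v f) (mkC H w)). rewrite <- hef. exact hu.
      * change ((fun v => cos_inc v f) (mkC H (gmul g w))). rewrite <- hef. exact hv.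
    + intros [X pf]. destruct pf as [u [v [hr ->]]] eqn:E.
      destruct (hR1 u v hr) as [x [h [hh [hu hv]]]].
      exists (mkC M (gmul h x)). apply sig_eq. simpl. apply pred_ext. intro v'.
      rewrite (inc_pair H M g sH sM Mg gnH Hgg MH Mconj v' (mkC M (gmul h x)) (gmul h x) eq_refl).
      assert (ex : rcoset H (gmul h x) = rcoset H x) by (apply (rcoset_eq H sH); gsimpl; exact hh).
      rewrite ex. split; intros [hh'|hh']; [left|right|left|right]; try (apply sig_eq; congruence);
        subst v'; congruence.
  - intros v e. simpl. tauto.
Qed.
End Iso.
End GenM2.

Section Main.
Set Default Proof Using "All".
Context {G : group} (H J : G -> Prop) (g : G).
Hypotheses (sH : is_subgroup H) (sJ : is_subgroup J) (gJ : J g) (gnH : ~ H g)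
  (HJind : index J (inter H J) 2).

Let sHJ : is_subgroup (inter H J) := sg_inter H J sH sJ.

Lemma J_dec j : J j -> inter H J j \/ inter H J (gmul j (ginv g)).
Proof.
  intro hj. destruct HJind as [l [hnd [hlen hmem]]].
  destruct l as [|a [|b [|c l]]]; simpl in hlen; try discriminate.
  assert (h1 : In (rcoset (inter H J) gone) [a; b]) by (apply hmem; exists gone; split; [apply sg1; auto|reflexivity]).
  assert (h2 : In (rcoset (inter H J) g) [a; b]) by (apply hmem; exists g; split; auto).
  assert (h3 : In (rcoset (inter H J) j) [a; b]) by (apply hmem; exists j; split; auto).
  assert (hne : rcoset (inter H J) gone <> rcoset (inter H J) g).
  { intro e. apply (rcoset_eq _ sHJ) in e. gsimpl_in e. apply gnH. apply sgVr; auto. apply e. }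
  assert (hX : rcoset (inter H J) j = rcoset (inter H J) gone \/ rcoset (inter H J) j = rcoset (inter H J) g).
  { simpl in h1, h2, h3. intuition congruence. }
  destruct hX as [e|e]; apply (rcoset_eq _ sHJ) in e; gsimpl_in e; auto.
Qed.

Lemma Hgg : H (gmul g g).
Proof.
  assert (hgg : J (gmul g g)) by (apply sgM; auto).
  destruct (J_dec _ hgg) as [[h _]|[h _]]; auto. gsimpl_in h. contradiction.
Qed.

Lemma J_MH m : J m -> H m \/ H (gmul m (ginv g)).
Proof. intro hm. destruct (J_dec m hm) as [[h _]|[h _]]; auto. Qed.

Lemma J_conj m : H m -> J m -> H (gmul g (gmul m (ginv g))).
Proof.
  intros hm hjm. assert (hj : J (gmul g (gmul m (ginv g)))) by (apply sgM; auto; apply sgM; auto; apply sgV; auto).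
  destruct (J_dec _ hj) as [[h _]|[h _]]; auto. exfalso. apply gnH.
  gsimpl_in h. pose proof Hgg as hgg.
  replace g with (gmul (gmul g (gmul m (gmul (ginv g) (ginv g)))) (gmul (gmul g g) (ginv m))) by (now gsimpl).
  apply sgM; auto. apply sgM; auto. apply sgV; auto.
Qed.

Notation K := (Kset H g).
Let sK' : is_subgroup K := sg_inter H _ sH (sg_conj H g sH).

Lemma K_char x : K x <-> H x /\ H (gmul g (gmul x (ginv g))).
Proof. unfold Kset, inter, conjset. tauto. Qed.

Lemma K_conj1 x : K x -> K (gmul g (gmul x (ginv g))).
Proof.
  rewrite !K_char. intros [h1 h2]. split; auto.
  replace (gmul g (gmul (gmul g (gmul x (ginv g))) (ginv g))) with (gmul (gmul g g) (gmul x (ginv (gmul g g)))) by (now gsimpl).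
  pose proof Hgg. apply sgM; auto. apply sgM; auto. apply sgV; auto.
Qed.

Lemma K_conj2 x : K x -> K (gmul (ginv g) (gmul x g)).
Proof.
  rewrite !K_char. intros [h1 h2]. split.
  - replace (gmul (ginv g) (gmul x g)) with (gmul (ginv (gmul g g)) (gmul (gmul g (gmul x (ginv g))) (gmul g g))) by (now gsimpl).
    pose proof Hgg. apply sgM; auto. apply sgV; auto. apply sgM; auto.
  - gsimpl. auto.
Qed.

Lemma K_gg : K (gmul g g).
Proof. apply K_char. pose proof Hgg. split; auto. now gsimpl. Qed.

Definition Lset := generated (fun x => K x \/ x = g).

Lemma L_char x : Lset x <-> K x \/ K (gmul x (ginv g)).
Proof.
  set (S := fun x => K x \/ K (gmul x (ginv g))).
  assert (sS : is_subgroup S).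
  { split; [|split].
    - left. apply sg1; auto.
    - intros a b [ha|ha] [hb|hb]; unfold S.
      + left. apply sgM; auto.
      + right. replace (gmul (gmul a b) (ginv g)) with (gmul a (gmul b (ginv g))) by (now gsimpl). apply sgM; auto.
      + right. replace (gmul (gmul a b) (ginv g)) with (gmul (gmul a (ginv g)) (gmul g (gmul b (ginv g)))) by (now gsimpl).
        apply sgM; auto. apply K_conj1; auto.
      + left. replace (gmul a b) with (gmul (gmul a (ginv g)) (gmul (gmul g (gmul (gmul b (ginv g)) (ginv g))) (gmul g g))) by (now gsimpl).
        apply sgM; auto. apply sgM; auto. apply K_conj1; auto. apply K_gg.
    - intros a [ha|ha]; unfold S.
      + left. apply sgV; auto.
      + right. replace (gmul (ginv a) (ginv g)) with (gmul (gmul (ginv g) (gmul (ginv (gmul a (ginv g))) g)) (ginv (gmul g g))) by (now gsimpl).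
        apply sgM; auto. apply K_conj2. apply sgV; auto. apply sgV; auto. apply K_gg. }
  split.
  - intro hx. apply (hx S sS). intros a [ha| ->]. now left. right. gsimpl. apply sg1; auto.
  - intros [hx|hx].
    + apply gen_base. now left.
    + replace x with (gmul (gmul x (ginv g)) g) by (now gsimpl). apply (sgM _ (gen_sg _)).
      apply gen_base; now left. apply gen_base; now right.
Qed.

Lemma sL : is_subgroup Lset. Proof. apply gen_sg. Qed.
Lemma Lg : Lset g. Proof. apply gen_base. now right. Qed.
Lemma L_MH m : Lset m -> H m \/ H (gmul m (ginv g)).
Proof. rewrite L_char, !K_char. tauto. Qed.
Lemma L_conj m : H m -> Lset m -> H (gmul g (gmul m (ginv g))).
Proof.
  intros hm hl. rewrite L_char in hl. destruct hl as [hl|hl]; rewrite K_char in hl. tauto.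
  exfalso. apply gnH. apply sgVr; auto. apply (sgMl H sH m); auto. tauto.
Qed.
Lemma K_L x : K x -> Lset x.
Proof. intro h. apply L_char. now left. Qed.
Lemma J_L x : J x -> Lset x.
Proof.
  intro hx. apply L_char. destruct (J_dec x hx) as [[h1 h2]|[h1 h2]].
  - left. apply K_char. split; auto. apply J_conj; auto.
  - right. apply K_char. split; auto. apply J_conj; auto.
Qed.
Lemma HL_K x : inter H Lset x <-> K x.
Proof.
  split.
  - intros [hx hl]. rewrite L_char in hl. destruct hl as [hl|hl]; auto. exfalso. rewrite K_char in hl.
    apply gnH. apply sgVr; auto. apply (sgMl H sH x); auto. tauto.
  - intro h. split. rewrite K_char in h; tauto. now apply K_L.
Qed.

Lemma index_LK : index Lset K 2.
Proof.
  exists [rcoset K gone; rcoset K g]. split; [|split; [reflexivity|]].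
  - constructor. intros [e|[]]. apply (rcoset_eq K sK') in e. gsimpl_in e. rewrite K_char in e.
    apply gnH. apply sgVr; auto. tauto.
    constructor. intros []. constructor.
  - intro X. simpl. split.
    + intros [x [hx ->]]. rewrite L_char in hx. destruct hx as [hx|hx].
      * left. apply (rcoset_eq K sK'). gsimpl. apply sgV; auto.
      * right; left. symmetry. apply (rcoset_eq K sK'). auto.
    + intros [<-|[<-|[]]]. exists gone. split; auto. apply sg1, sL. exists g. split; auto. apply Lg.
Qed.

Lemma index_LJ lam : index K (inter H J) lam -> index Lset J lam.
Proof.
  intro hl. unfold index.
  apply (card_ext (fun X => exists x, K x /\ X = rcoset J x)).
  { intro X. split.
    - intros [x [hx ->]]. exists x. split; auto. now apply K_L.
    - intros [l [hl' ->]]. rewrite L_char in hl'. destruct hl' as [h|h].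
      + exists l; auto.
      + exists (gmul (ginv g) l). split.
        * replace (gmul (ginv g) l) with (gmul (ginv g) (gmul (gmul l (ginv g)) g)) by (now gsimpl). now apply K_conj2.
        * apply (rcoset_eq J sJ). gsimpl. exact gJ. }
  apply (card_corr K (rcoset (inter H J)) (rcoset J)); [|exact hl].
  intros x y hx hy. rewrite (rcoset_eq _ sHJ), (rcoset_eq J sJ). rewrite K_char in hx. rewrite K_char in hy.
  unfold inter. split; [tauto|]. intro h. split; auto. apply sgM; auto. tauto. apply sgV; auto. tauto.
Qed.
End Main.

Lemma same_action_core {G : group} (H J : G -> Prop) (sH : is_subgroup H) (sJ : is_subgroup J) x y :
  same_action H J x y <-> core (inter H J) (gmul x (ginv y)).
Proof.
  split.
  - intros [hv he] c. unfold conjset, inter.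
    specialize (hv (mkC H c)). specialize (he (mkC J c)). simpl in hv, he.
    rewrite !(rmul_rcoset H) in hv. rewrite !(rmul_rcoset J) in he.
    apply (rcoset_eq H sH) in hv. apply (rcoset_eq J sJ) in he. gsimpl_in hv. gsimpl_in he. gsimpl. auto.
  - intro hc. split.
    + intro v. destruct (CosV_rep v) as [a ha]. rewrite ha, !(rmul_rcoset H). apply (rcoset_eq H sH).
      specialize (hc a). unfold conjset, inter in hc. gsimpl_in hc. gsimpl. tauto.
    + intro v. destruct (CosV_rep v) as [a ha]. rewrite ha, !(rmul_rcoset J). apply (rcoset_eq J sJ).
      specialize (hc a). unfold conjset, inter in hc. gsimpl_in hc. gsimpl. tauto.
Qed.

Lemma arc_stab {G : group} (H J : G -> Prop) (g : G) (sH : is_subgroup H) (sJ : is_subgroup J) x :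
  (rmul H x = H /\ rmul J x = J /\ rmul (rcoset H g) x = rcoset H g) <-> inter (inter H (conjset H g)) J x.
Proof.
  rewrite (rmul_sub H sH), (rmul_sub J sJ), (rmul_rcoset H), (rcoset_eq H sH).
  unfold inter, conjset. gsimpl. tauto.
Qed.

Section Main2.
Set Default Proof Using "All".
Context {G : group} (H J : G -> Prop) (g : G).
Hypotheses (sH : is_subgroup H) (sJ : is_subgroup J) (gJ : J g) (gnH : ~ H g)
  (HJind : index J (inter H J) 2).

Let hgg := Hgg H J g sH sJ gJ gnH HJind.
Let jmh := J_MH H J g sH sJ gJ gnH HJind.
Let jc := J_conj H J g sH sJ gJ gnH HJind.
Let sl := sL H J g sH sJ gJ gnH HJind.
Let lg := Lg H J g sH sJ gJ gnH HJind.
Let lmh := L_MH H J g sH sJ gJ gnH HJind.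
Let lc := L_conj H J g sH sJ gJ gnH HJind.
Notation L := (Lset H g).

Lemma KJ_HJ x : inter (Kset H g) J x <-> inter H J x.
Proof.
  unfold Kset, inter, conjset. split; [tauto|]. intros [h1 h2]. split; auto.
Qed.

Definition upset (X : G -> Prop) : G -> Prop := fun z => exists y, X y /\ L (gmul z (ginv y)).

Lemma up_rcoset w : upset (rcoset J w) = rcoset L w.
Proof.
  apply pred_ext. intro z. unfold upset. rewrite (rcoset_mem L). split.
  - intros [y [hy hz]]. apply (rcoset_mem J) in hy.
    replace (gmul z (ginv w)) with (gmul (gmul z (ginv y)) (gmul y (ginv w))) by (now gsimpl).
    apply (sgM L sl); auto. apply (J_L H J g sH sJ gJ gnH HJind); auto.
  - intro h. exists w. split; auto. apply (rcoset_mem J). gsimpl. apply (sg1 J sJ).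
Qed.

Lemma up_pf (e : CosV J) : exists x, upset (proj1_sig e) = rcoset L x.
Proof. destruct (CosV_rep e) as [w hw]. exists w. now rewrite hw, up_rcoset. Qed.

Definition upC (e : CosV J) : CosV L := exist _ (upset (proj1_sig e)) (up_pf e).

Lemma ext_iso lam : index (Kset H g) (inter H J) lam -> graph_iso (Cos H J) (extender (Cos H L) lam).
Proof.
  intro hl. pose proof (index_LJ H J g sH sJ gJ gnH HJind lam hl) as hLJ.
  assert (hfib : forall X : CosV L, card_eq (fun e => upC e = X) lam).
  { intro X. destruct (CosV_rep X) as [r hr].
    apply (card_ext (fun e => exists l, L l /\ e = mkC J (gmul l r))).
    { intro e. destruct (CosV_rep e) as [w hw]. split.
      - intros [l [hl' ->]]. apply sig_eq. simpl. rewrite up_rcoset, hr. apply (rcoset_eq L sl). gsimpl. exact hl'.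
      - intro he. apply (f_equal (@proj1_sig _ _)) in he. simpl in he. rewrite hw, up_rcoset, hr in he.
        apply (rcoset_eq L sl) in he. exists (gmul w (ginv r)). split; auto. apply sig_eq. rewrite hw. simpl. now gsimpl. }
    apply (card_corr L (rcoset J) (fun l => mkC J (gmul l r))); [|exact hLJ].
    intros x y _ _. rewrite mkC_eq, !(rcoset_eq J sJ). gsimpl. tauto. }
  destruct (fiber_bij upC lam (mkC J gone) hfib) as [h [hb hfst]].
  exists (fun v => v), h. split; [|split].
  - exists (fun v => v). split; reflexivity.
  - exact hb.
  - intros v e. simpl. rewrite hfst. destruct (CosV_rep e) as [w hw].
    assert (hw' : proj1_sig (upC e) = rcoset L w) by (simpl; now rewrite hw, up_rcoset).
    rewrite (inc_pair H J g sH sJ gJ gnH hgg jmh jc v e w hw).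
    rewrite (inc_pair H L g sH sl lg gnH hgg lmh lc v (upC e) w hw'). tauto.
Qed.

Lemma simple_iff : simple (Cos H J) <-> (forall x, L x <-> J x).
Proof.
  split.
  - intros hs x. pose proof (simple_K H J g sH sJ gJ gnH hgg jmh jc hs) as hKJ. split.
    + intro hx. rewrite (L_char H J g sH sJ gJ gnH HJind) in hx. destruct hx as [hx|hx].
      * exact (hKJ x hx).
      * pose proof (hKJ _ hx) as hx'. replace x with (gmul (gmul x (ginv g)) g) by (now gsimpl).
        apply (sgM J sJ); [exact hx'|exact gJ].
    + apply (J_L H J g sH sJ gJ gnH HJind).
  - intro he. apply (cos_simple H J g sH sJ gJ gnH hgg jmh jc). intros x hx. apply (proj1 (he x)).
    apply (K_L H J g sH sJ gJ gnH HJind); auto.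
Qed.
End Main2.

Theorem theorem2p2 (G : group) (H J : G -> Prop) (g : G) (k lam : nat)
  (HH : is_subgroup H) (HJ : is_subgroup J)
  (HneG : exists x : G, ~ H x)
  (HJind : index J (inter H J) 2)
  (HHfin : exists n, index H (inter H J) n)
  (gJ : J g) (gnH : ~ H g)
  (Hk : index H (inter H (conjset H g)) k)
  (Hlam : index (inter H (conjset H g)) (inter H J) lam) :
  let K := inter H (conjset H g) in
  let L := generated (fun x => K x \/ x = g) in
  let Gamma := Cos H J in
  (* (a) *)
  (is_graph Gamma /\ locally_finite Gamma /\ regular Gamma k lam /\
   (connected Gamma <-> forall x : G, generated (fun y => H y \/ J y) x)) /\
  (* (b) *)
  (cos_action_aut H J /\ cos_arc_transitive H J /\
   (forall x y : G, same_action H J x y <-> core (inter H J) (gmul x (ginv y))) /\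
   (forall x : G, rmul H x = H <-> H x) /\
   (forall x : G, rmul J x = J <-> J x) /\
   (forall x : G, (rmul H x = H /\ rmul J x = J /\ rmul (rcoset H g) x = rcoset H g)
                  <-> inter K J x) /\
   (forall x : G, inter K J x <-> inter H J x)) /\
  (* (c) *)
  ((forall x : G, inter H L x <-> K x) /\ index L K 2 /\ index L J lam /\
   is_graph (Cos H L) /\ locally_finite (Cos H L) /\ simple (Cos H L) /\
   graph_iso (Cos H L) (SimpCos H g)) /\
  (* (d) *)
  (graph_iso (Cos H L) (base_graph Gamma) /\
   (graph_iso Gamma (extender (Cos H L) lam) /\
    cos_arc_transitive H L /\ cos_arc_transitive H J) /\
   (simple Gamma <-> forall x : G, L x <-> J x)).
Proof.
  cbv zeta.
  change (generated (fun x => inter H (conjset H g) x \/ x = g)) with (Lset H g).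
  change (inter H (conjset H g)) with (Kset H g) in *.
  pose proof (Hgg H J g HH HJ gJ gnH HJind) as hgg.
  pose proof (J_MH H J g HH HJ gJ gnH HJind) as jmh.
  pose proof (J_conj H J g HH HJ gJ gnH HJind) as jc.
  pose proof (sL H J g HH HJ gJ gnH HJind) as sl.
  pose proof (Lg H J g HH HJ gJ gnH HJind) as lg.
  pose proof (L_MH H J g HH HJ gJ gnH HJind) as lmh.
  pose proof (L_conj H J g HH HJ gJ gnH HJind) as lc.
  pose proof (K_L H J g HH HJ gJ gnH HJind) as kl.
  split; [|split; [|split]].
  -
    split; [|split; [|split]].
    + exact (cos_is_graph H J g HH HJ gJ gnH hgg jmh jc).
    + destruct HHfin as [n hn]. exact (cos_locfin H J g HH HJ gJ gnH hgg jmh jc n hn).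
    + split. exact (cos_valency H J g HH HJ gJ gnH hgg jmh jc k Hk).
      exact (cos_mult H J g HH HJ gJ gnH hgg jmh jc lam Hlam).
    + exact (cos_connected H J g HH HJ gJ gnH hgg jmh jc).
  -
    split; [|split; [|split; [|split; [|split; [|split]]]]].
    + exact (cos_aut H J g HH HJ gJ gnH hgg jmh jc).
    + exact (cos_arc_trans H J g HH HJ gJ gnH hgg jmh jc).
    + intros x y. exact (same_action_core H J HH HJ x y).
    + intro x. exact (rmul_sub H HH x).
    + intro x. exact (rmul_sub J HJ x).
    + intro x. exact (arc_stab H J g HH HJ x).
    + intro x. exact (KJ_HJ H J g HH HJ gJ gnH HJind x).
  -
    split; [|split; [|split; [|split; [|split; [|split]]]]].
    + intro x. exact (HL_K H J g HH HJ gJ gnH HJind x).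
    + exact (index_LK H J g HH HJ gJ gnH HJind).
    + exact (index_LJ H J g HH HJ gJ gnH HJind lam Hlam).
    + exact (cos_is_graph H (Lset H g) g HH sl lg gnH hgg lmh lc).
    + apply (cos_locfin H (Lset H g) g HH sl lg gnH hgg lmh lc k).
      replace (inter H (Lset H g)) with (Kset H g). exact Hk.
      apply pred_ext. intro x. symmetry. exact (HL_K H J g HH HJ gJ gnH HJind x).
    + exact (cos_simple H (Lset H g) g HH sl lg gnH hgg lmh lc kl).
    + apply (iso_simple H (Lset H g) g HH sl lg gnH hgg lmh lc (simpcos_adj H g)); auto.
      * intros u v [x [y [hx [hy [h1 [h2 [hh1 [hh2 e]]]]]]]]. exists x, h2. split; auto. split; auto.
        rewrite hy. apply (rcoset_eq H HH).
        replace y with (gmul (gmul (gmul h1 g) h2) x) by (rewrite <- e; now gsimpl).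
        gsimpl. exact hh1.
      * intro w. exists w, (gmul g w). split; [reflexivity|split; [reflexivity|]].
        exists gone, gone. split; [apply (sg1 H HH)|split; [apply (sg1 H HH)|]]. now gsimpl.
  -
    split; [|split; [split; [|split]|]].
    + apply (iso_simple H (Lset H g) g HH sl lg gnH hgg lmh lc (@adj (Cos H J))); auto.
      * intros u v huv. destruct (CosV_rep u) as [x hx].
        apply (adj_char H J g HH HJ gJ gnH hgg jmh jc u v x hx) in huv. destruct huv as [h [hh hv]].
        exists x, h. auto.
      * intro w. apply (adj_char H J g HH HJ gJ gnH hgg jmh jc (mkC H w) _ w eq_refl).
        exists gone. split. apply (sg1 H HH). simpl. now gsimpl.
    + exact (ext_iso H J g HH HJ gJ gnH HJind lam Hlam).
    + exact (cos_arc_trans H (Lset H g) g HH sl lg gnH hgg lmh lc).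
    + exact (cos_arc_trans H J g HH HJ gJ gnH hgg jmh jc).
    + exact (simple_iff H J g HH HJ gJ gnH HJind).
Qed.
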